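(* Let $X$ be a topological space and let $(A_n)_{n\in\mathbb N}$ be subsets of $X$ (each with the subspace topology) such that $C(A_n)$ has the countable sup property for every $n$ and $\bigcup_{n=1}^\infty A_n$ is dense in $X$. Then $C(X)$ has the countable sup property.
   Context: $C(Y)$ denotes the vector lattice of all real-valued continuous functions on a space $Y$ with the pointwise order. A vector lattice has the countable sup property if every nonempty subset possessing a supremum contains a countable subset with the same supremum. *)

(* Defs.v *)
From HB Require Import structures.
From mathcomp Require Import all_boot all_order all_algebra.
From mathcomp Require Import all_classical all_reals all_analysis.
Set Implicit Arguments. Unset Strict Implicit. Unset Printing Implicit Defensive.
Import Order.TTheory GRing.Theory Num.Theory.
Import numFieldNormedType.Exports.
Local Open Scope classical_set_scope.
Local Open Scope ring_scope.

Definition subsp (X : topologicalType) (A : set X) : topologicalType :=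
  initial_topology (val : set_type A -> X).

Definition is_sup_C (R : realType) (Y : topologicalType)
    (S : set (Y -> R)) (s : Y -> R) : Prop :=
  continuous s /\
  (forall f, S f -> forall y, f y <= s y) /\
  (forall g : Y -> R, continuous g ->
     (forall f, S f -> forall y, f y <= g y) -> forall y, s y <= g y).

Definition countable_sup_prop (R : realType) (Y : topologicalType) : Prop :=
  forall (S : set (Y -> R)) (s : Y -> R),
    (forall f, S f -> continuous f) -> S !=set0 -> is_sup_C S s ->
    exists S' : set (Y -> R), S' `<=` S /\ countable S' /\ is_sup_C S' s.

(* Main.v *)
Require Import Defs.
From HB Require Import structures.
From mathcomp Require Import all_boot all_order all_algebra.
From mathcomp Require Import all_classical all_reals all_analysis.
From mathcomp Require Import ring lra.
Import Order.TTheory GRing.Theory Num.Theory.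
Import numFieldNormedType.Exports.
Local Open Scope classical_set_scope.
Local Open Scope ring_scope.

Section H.
Context {R : realType} {T : topologicalType}.
Implicit Types f g : T -> R.
Lemma cB f g : continuous f -> continuous g -> continuous (fun x => f x - g x).
Proof. move=> cf cg x; have := (@continuousB R R^o T f g x (cf x) (cg x)); exact. Qed.
Lemma cD f g : continuous f -> continuous g -> continuous (fun x => f x + g x).
Proof. move=> cf cg x; have := (@continuousD R R^o T f g x (cf x) (cg x)); exact. Qed.
Lemma cK (c : R) : continuous (fun _ : T => c).
Proof. by move=> x; apply: cst_continuous. Qed.
Lemma cMl (c : R) f : continuous f -> continuous (fun x => c * f x).
Proof. move=> cf x; have := (@continuousM R T (fun _ => c) f x (@cst_continuous T R c x) (cf x)); exact. Qed.
Lemma cmin f g : continuous f -> continuous g -> continuous (fun x => Num.min (f x) (g x)).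
Proof. move=> cf cg x; have := (@continuous_min R T f g x (cf x) (cg x)); exact. Qed.
Lemma cmax f g : continuous f -> continuous g -> continuous (fun x => Num.max (f x) (g x)).
Proof. move=> cf cg x; have := (@continuous_max R T f g x (cf x) (cg x)); exact. Qed.
Lemma open_pos f : continuous f -> open [set x | 0 < f x].
Proof. by move=> cf; move/continuousP: cf => /(_ _ (@open_gt R 0)). Qed.
End H.

Lemma cval (X : topologicalType) (A : set X) : continuous (val : subsp A -> X).
Proof. exact: initial_continuous. Qed.

Lemma cvalc (R : realType) (X : topologicalType) (A : set X) (h : X -> R) :
  continuous h -> continuous (fun z : subsp A => h (val z)).
Proof. move=> hc z; apply: continuous_comp; [exact: cval|exact: hc]. Qed.

Definition Tset (R : realType) (X : topologicalType) (B : set X)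
  (S : set (X -> R)) (s : X -> R) (e : R) : set (subsp B -> R) :=
  fun f => continuous f /\ (forall y, f y <= 1) /\
    ((exists h, S h /\ forall y, 0 < f y -> s (val y) - e < h (val y)) \/
     (forall y, 0 < f y -> forall h, S h -> h (val y) <= s (val y) - e)).
Arguments Tset {R X} B S s e.

Lemma sup_T (R : realType) (X : topologicalType) (B : set X)
  (S : set (X -> R)) (s : X -> R) (e : R) :
  (forall f, S f -> continuous f) -> continuous s ->
  is_sup_C (Tset B S s e) (fun _ => 1).
Proof.
move=> Sc sc; split; first exact: cK.
split; first by move=> f [_ [f1 _]] y; exact: f1.
move=> g gc gub.
have claim1 : forall y, (exists h, S h /\ s (val y) - e < h (val y)) -> 1 <= g y.
  move=> y [h [Sh lt]].
  pose q := h (val y) - s (val y) + e.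
  have q0 : 0 < q by rewrite /q; lra.
  pose f := fun z : subsp B => Num.min 1 (q^-1 * Num.max 0 (h (val z) - s (val z) + e)).
  have Tf : Tset B S s e f.
    split.
      apply: cmin; first exact: cK.
      apply: cMl; apply: cmax; first exact: cK.
      apply: cD; last exact: cK.
      by apply: cB; apply: cvalc => //; apply: Sc.
    split; first by move=> z; rewrite /f ge_min lexx.
    left; exists h; split => // z; rewrite /f lt_min => /andP[_].
    rewrite pmulr_rgt0 ?invr_gt0 // lt_max ltxx /=; lra.
  have := gub f Tf y; rewrite /f.
  have -> : h (val y) - s (val y) + e = q by [].
  have e1 : Num.max 0 q = q by rewrite max_r // ltW.
  have e2 : q^-1 * q = 1 by rewrite mulVf // gt_eqF.
  by rewrite e1 e2 minxx.
move=> y; rewrite leNgt; apply/negP => gy.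
case: (EM (exists h, S h /\ s (val y) - e < h (val y))) => [ex|nex].
  by have := claim1 y ex; lra.
pose f := fun z : subsp B => Num.min 1 ((1 - g y)^-1 * Num.max 0 (1 - g z)).
have q0 : 0 < 1 - g y by lra.
have Tf : Tset B S s e f.
  split.
    apply: cmin; first exact: cK.
    apply: cMl; apply: cmax; first exact: cK.
    by apply: cB => //; exact: cK.
  split; first by move=> z; rewrite /f ge_min lexx.
  right => z; rewrite /f lt_min => /andP[_].
  rewrite pmulr_rgt0 ?invr_gt0 // lt_max ltxx /= => gz h Sh.
  rewrite leNgt; apply/negP => hz.
  have := claim1 z (ex_intro _ h (conj Sh hz)); lra.
have := gub f Tf y; rewrite /f.
have e1 : Num.max 0 (1 - g y) = 1 - g y by rewrite max_r // ltW.
have e2 : (1 - g y)^-1 * (1 - g y) = 1 by rewrite mulVf // gt_eqF.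
rewrite e1 e2 minxx; lra.
Qed.

Theorem proposition4p11 (R : realType) (X : topologicalType) (A : nat -> set X) :
  (forall n, countable_sup_prop R (subsp (A n))) ->
  dense (\bigcup_n A n) ->
  countable_sup_prop R X.
Proof.
move=> HA Hd S s Scont [f0 Sf0] [sc [sub sleast]].
pose e (k : nat) : R := (k.+1%:R)^-1.
have Hex : forall n k, exists p : set (subsp (A n) -> R) * ((subsp (A n) -> R) -> X -> R),
   p.1 `<=` Tset (A n) S s (e k) /\ countable p.1 /\ is_sup_C p.1 (fun _ => 1) /\
   forall f, S (p.2 f) /\
     ((exists h, S h /\ forall y, 0 < f y -> s (val y) - e k < h (val y)) ->
      forall y, 0 < f y -> s (val y) - e k < p.2 f (val y)).
  move=> n k.
  have [|||T' [T'sub [T'c T'sup]]] := HA n (Tset (A n) S s (e k)) (fun _ => 1).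
  - by move=> f [].
  - exists (fun _ => 0); split; first exact: cK.
    split; first by move=> z; rewrite ler01.
    by right => z; rewrite ltxx.
  - exact: sup_T.
  have [w Hw] : {w : (subsp (A n) -> R) -> X -> R & forall f, S (w f) /\
     ((exists h, S h /\ forall y, 0 < f y -> s (val y) - e k < h (val y)) ->
      forall y, 0 < f y -> s (val y) - e k < w f (val y))}.
    apply: (@choice _ _ (fun (f : subsp (A n) -> R) (h : X -> R) => S h /\
     ((exists h, S h /\ forall y, 0 < f y -> s (val y) - e k < h (val y)) ->
      forall y, 0 < f y -> s (val y) - e k < h (val y)))) => f; case: (EM (exists h, S h /\ forall y, 0 < f y -> s (val y) - e k < h (val y))).
      by move=> [h [Sh Hh]]; exists h; split => // _.
    by move=> nex; exists f0; split => // ex; exfalso; apply: nex.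
  by exists (T', w).
pose F n k := projT1 (cid (Hex n k)).
have HF n k := projT2 (cid (Hex n k)).
exists (\bigcup_n \bigcup_k ((F n k).2 @` (F n k).1)).
split.
  move=> h [n _ [k _ [f _ <-]]].
  by have [_ [_ [_ /(_ f) []]]] := HF n k.
split.
  apply: bigcup_countable; first exact: countableP.
  move=> n _; apply: bigcup_countable; first exact: countableP.
  move=> k _; apply: sub_countable; first exact: card_image_le.
  by have [_ []] := HF n k.
split; first exact: sc.
split.
  move=> h [n _ [k _ [f _ <-]]] y.
  have [_ [_ [_ /(_ f) [Sw _]]]] := HF n k.
  exact: sub.
move=> g gc gub x0; rewrite leNgt; apply/negP => Hlt.
pose d := s x0 - g x0.
have dE : d = s x0 - g x0 by [].
have d0 : 0 < d by rewrite dE subr_gt0.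
pose k := Num.trunc ((d/2)^-1).
have ek : e k < d/2.
  rewrite /e invf_plt ?posrE ?ltr0Sn //; last lra.
  exact: truncnS_gt.
have ek0 : 0 < e k by rewrite /e invr_gt0 ltr0Sn.
case: (EM (exists h z, S h /\ d/2 < s z - g z /\ s z - e k < h z)) => [[h [z [Sh [H1 H2]]]]|nex].
  pose p := fun y => Num.min (s y - g y - d/2) (h y - s y + e k).
  have pc : continuous p.
    apply: cmin; first by apply: cB; [apply: cB|exact: cK].
    by apply: cD; [apply: cB => //; apply: Scont|exact: cK].
  have pz : 0 < p z by rewrite /p lt_min; apply/andP; split; lra.
  have [a [Wa [n _ Ana]]] := Hd [set y | 0 < p y] (ex_intro _ z pz) (open_pos _ pc).
  pose y0 : subsp (A n) := exist _ a (mem_set Ana).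
  have [T'sub [_ [[_ [_ T'least]] Hw]]] := HF n k.
  pose G := fun y : subsp (A n) => Num.max 0 (1 - p (val y)).
  have Gc : continuous G.
    apply: cmax; first exact: cK.
    by apply: cB; [exact: cK|exact: cvalc].
  have := T'least G Gc _ y0.
  have Wa' : 0 < p a := Wa.
  have Gy0 : G y0 < 1 by rewrite /G gt_max; apply/andP; split; rewrite /y0 /=; lra.
  move=> H; suff: 1 <= G y0 by lra.
  apply: H => f T'f y.
  have [fc [f1 [tA|tB]]] := T'sub f T'f.
    case: (leP (p (val y)) 0) => py.
      by rewrite /G le_max; apply/orP; right; have := f1 y; lra.
    rewrite /G le_max; apply/orP; left; rewrite leNgt; apply/negP => fy.
    have [_ Hwf] := Hw f; have := Hwf tA y fy.
    have gw : (F n k).2 f (val y) <= g (val y).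
      apply: gub; exists n => //; exists k => //; exists f => //.
    move: py; rewrite lt_min => /andP[p1 p2]; lra.
  case: (leP (p (val y)) 0) => py.
    by rewrite /G le_max; apply/orP; right; have := f1 y; lra.
  rewrite /G le_max; apply/orP; left; rewrite leNgt; apply/negP => fy.
  have := tB y fy h Sh.
  move: py; rewrite lt_min => /andP[p1 p2]; lra.
pose u := fun y => Num.max (s y - e k) (g y + d/2).
have uc : continuous u.
  apply: cmax; first by apply: cB; [exact: sc|exact: cK].
  by apply: cD; [exact: gc|exact: cK].
have := sleast u uc _ x0.
have ux0 : u x0 < s x0 by rewrite /u gt_max; apply/andP; split; lra.
move=> H; suff: s x0 <= u x0 by lra.
apply: H => h Sh y.
rewrite /u le_max; case: (ltP (d/2) (s y - g y)) => Hy.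
  apply/orP; left; rewrite leNgt; apply/negP => H2; apply: nex.
  by exists h, y; split.
apply/orP; right; have := sub h Sh y; lra.
Qed.
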